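(* Let $A,B,C\in\mathfrak{sl}_4(\mathbb R)$ be diagonal. Then $(G_{A,B,C},\varphi)$ satisfies $d\psi=0$ (where $\psi=*\varphi$) if and only if $A=\mathrm{Diag}(a_1,-a_1,a_2,-a_2)$, $B=\mathrm{Diag}(b_1,b_2,-b_1,-b_2)$, $C=\mathrm{Diag}(c_1,c_2,-c_2,-c_1)$ for some $a_i,b_i,c_i\in\mathbb R$. In that case $\Delta\varphi=d^*d\varphi$, $\Delta\psi=d\tau_3=*\Delta\varphi$, and $$\tau_3=\big(-(b_1+b_2)\bar\omega_7+(a_1+a_2)\bar\omega_1\big)\wedge e^2+\big((c_1+c_2)\bar\omega_7-(a_1-a_2)\bar\omega_2\big)\wedge e^1+\big((b_1-b_2)\bar\omega_2-(c_1-c_2)\bar\omega_1\big)\wedge e^7,$$ $$\Delta\varphi=\big((b_1+b_2)^2+(c_1+c_2)^2\big)\omega_7\wedge e^7+\big((b_1-b_2)^2+(a_1-a_2)^2\big)\omega_2\wedge e^2+\big((c_1-c_2)^2+(a_1+a_2)^2\big)\omega_1\wedge e^1,$$ $$\Delta\psi=\big((b_1+b_2)^2+(c_1+c_2)^2\big)\omega_7\wedge e^{12}-\big((b_1-b_2)^2+(a_1-a_2)^2\big)\omega_2\wedge e^{17}+\big((c_1-c_2)^2+(a_1+a_2)^2\big)\omega_1\wedge e^{27}.$$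
   Context: For commuting $A,B,C\in\mathfrak{sl}_4(\mathbb R)$, $\mathfrak g_{A,B,C}$ is the Lie algebra with basis $\{e_1,\dots,e_7\}$ in which $\langle e_7,e_1,e_2\rangle$ is an abelian subalgebra, $\mathfrak n=\langle e_3,\dots,e_6\rangle$ is an abelian ideal, and in the basis $\{e_3,\dots,e_6\}$, $\mathrm{ad}\,e_7|_{\mathfrak n}=A$, $\mathrm{ad}\,e_1|_{\mathfrak n}=B$, $\mathrm{ad}\,e_2|_{\mathfrak n}=C$; $G_{A,B,C}$ is the simply connected Lie group with this Lie algebra, with left-invariant positive 3-form $\varphi=e^{127}+e^{347}+e^{567}+e^{135}-e^{146}-e^{236}-e^{245}$ ($\{e^i\}$ dual basis). The induced metric makes $\{e_1,\dots,e_7\}$ oriented orthonormal; $*$ is its Hodge star, $d^*$ the codifferential and $\Delta=dd^*+d^*d$ the Hodge Laplacian. $\tau_3$ is the torsion 3-form, i.e. the 3-form in the 27-dimensional $G_2$-irreducible component such that $d\varphi=\tau_0\psi+3\tau_1\wedge\varphi+*\tau_3$ with $\tau_0$ a function and $\tau_1$ a 1-form. Notation: $\omega_7=e^{34}+e^{56}$, $\omega_1=e^{35}-e^{46}$, $\omega_2=-e^{36}-e^{45}$, $\bar\omega_7=e^{34}-e^{56}$, $\bar\omega_1=e^{35}+e^{46}$, $\bar\omega_2=e^{45}-e^{36}$. *)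

(* Defs.v *)
(* Left-invariant forms on the 7-dimensional Lie group G_{A,B,C}
   are identified with elements of the exterior algebra of g^*, represented by
   their coefficients in the basis e^K (K a subset of {e_1..e_7}, taken in
   increasing order).  Index convention: e_{k+1} <-> (k : 'I_7). *)
From HB Require Import structures.
From mathcomp Require Import all_boot all_order all_algebra.
From mathcomp Require Import reals.
Set Implicit Arguments. Unset Strict Implicit. Unset Printing Implicit Defensive.
Import Order.TTheory GRing.Theory Num.Theory.
Local Open Scope ring_scope.

Notation lform R := {ffun {set 'I_7} -> R^o}.

Section Forms.
Variable R : realType.

Definition eb (K : {set 'I_7}) : lform R := [ffun L : {set 'I_7} => (L == K)%:R].

(* sign of e^I /\ e^J relative to e^{I u J} (number of inversions) *)
Definition sgn_pair (I J : {set 'I_7}) : R :=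
  (-1) ^+ #|[set p : 'I_7 * 'I_7 | [&& p.1 \in I, p.2 \in J & (p.2 < p.1)%N]]|.

Definition wedge (a b : lform R) : lform R :=
  [ffun K : {set 'I_7} => \sum_(I : {set 'I_7}) \sum_(J : {set 'I_7} |
        (I :&: J == set0) && (I :|: J == K)) sgn_pair I J * a I * b J].

(* Hodge star for the metric making e_1..e_7 oriented orthonormal:
   *e^I = sgn(I, I^c) e^{I^c}, so that e^I /\ *e^I = e^{1..7}. *)
Definition hodge (a : lform R) : lform R := [ffun K : {set 'I_7} => sgn_pair (~: K) K * a (~: K)].

Definition Diag4 (x y z w : R) : 'M[R]_4 :=
  diag_mx (\row_(i < 4) nth 0 [:: x; y; z; w] i).

(* position of e_i in n = <e_3,...,e_6> *)
Definition nidx (i : 'I_7) : option 'I_4 :=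
  if (2 <= i)%N && (i <= 5)%N then Some (inord (i - 2)) else None.

(* ad e_7 = A, ad e_1 = B, ad e_2 = C on n (matrices in the basis e_3..e_6,
   columns = images of basis vectors) *)
Definition adm (A B C : 'M[R]_4) (i : 'I_7) : option 'M[R]_4 :=
  if val i == 6%N then Some A else if val i == 0%N then Some B
  else if val i == 1%N then Some C else None.

(* structure constants: [e_i, e_j] = sum_m sc m i j e_m *)
Definition sc (A B C : 'M[R]_4) (m i j : 'I_7) : R :=
  match adm A B C i, nidx j, nidx m with
  | Some M, Some j', Some m' => M m' j' | _, _, _ => 0 end -
  match adm A B C j, nidx i, nidx m with
  | Some M, Some i', Some m' => M m' i' | _, _, _ => 0 end.

Definition pos (K : {set 'I_7}) (i : 'I_7) : nat := #|[set l in K | (l < i)%N]|.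

(* value a(e_m, e_J) with J in increasing order *)
Definition evalm (a : lform R) (m : 'I_7) (J : {set 'I_7}) : R :=
  if m \in J then 0 else sgn_pair [set m] J * a (m |: J).

(* exterior derivative of left-invariant forms (Chevalley-Eilenberg):
   da(x_0..x_k) = sum_{p<q} (-1)^{p+q} a([x_p,x_q], x_0..^p..^q..x_k) *)
Definition dd (A B C : 'M[R]_4) (a : lform R) : lform R :=
  [ffun K : {set 'I_7} => \sum_(i in K) \sum_(j in K | (i < j)%N)
     (-1) ^+ (pos K i + pos K j) *
     \sum_(m : 'I_7) sc A B C m i j * evalm a m (K :\ i :\ j)].

(* codifferential in dimension 7: on k-forms d^* = (-1)^k * d *;
   the result of degree j = k-1 gets sign (-1)^(j+1) *)
Definition dstar (A B C : 'M[R]_4) (a : lform R) : lform R :=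
  [ffun K : {set 'I_7} => (-1) ^+ (#|K|.+1) * hodge (dd A B C (hodge a)) K].

Definition lap (A B C : 'M[R]_4) (a : lform R) : lform R :=
  dd A B C (dstar A B C a) + dstar A B C (dd A B C a).

Definition is_deg (k : nat) (a : lform R) : Prop := forall K : {set 'I_7}, #|K| != k -> a K = 0.

Definition e1 : lform R := eb [set (0 : 'I_7)].
Definition e2 : lform R := eb [set (1 : 'I_7)].
Definition e7 : lform R := eb [set (6 : 'I_7)].
Definition e12 : lform R := wedge e1 e2.
Definition e17 : lform R := wedge e1 e7.
Definition e27 : lform R := wedge e2 e7.

Definition e3 (i j k : 'I_7) : lform R := wedge (eb [set i]) (wedge (eb [set j]) (eb [set k])).
Definition e2f (i j : 'I_7) : lform R := wedge (eb [set i]) (eb [set j]).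

(* phi = e127 + e347 + e567 + e135 - e146 - e236 - e245 *)
Definition phi : lform R :=
  e3 0 1 6 + e3 2 3 6 + e3 4 5 6 + e3 0 2 4 - e3 0 3 5 - e3 1 2 5 - e3 1 3 4.
Definition psi : lform R := hodge phi.

Definition om7 : lform R := e2f 2 3 + e2f 4 5.
Definition om1 : lform R := e2f 2 4 - e2f 3 5.
Definition om2 : lform R := - e2f 2 5 - e2f 3 4.
Definition om7b : lform R := e2f 2 3 - e2f 4 5.
Definition om1b : lform R := e2f 2 4 + e2f 3 5.
Definition om2b : lform R := e2f 3 4 - e2f 2 5.

(* Lambda^3_27 = {g in Lambda^3 | g /\ phi = 0 = g /\ psi} (Bryant); tau3 is the
   component of d phi = tau0 psi + 3 tau1 /\ phi + * tau3 in it. *)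
Definition is_tau3 (A B C : 'M[R]_4) (t3 : lform R) : Prop :=
  [/\ is_deg 3 t3, wedge t3 phi = 0, wedge t3 psi = 0 &
   exists (t0 : R) (t1 : lform R), is_deg 1 t1 /\
     dd A B C phi = t0 *: psi + 3%:R *: wedge t1 phi + hodge t3].

End Forms.

(* Main.v *)
Require Import Defs.
From HB Require Import structures.
From mathcomp Require Import all_boot all_order all_algebra.
From mathcomp Require Import reals.
From mathcomp Require Import ring lra zify.
Set Implicit Arguments. Unset Strict Implicit. Unset Printing Implicit Defensive.
Import Order.TTheory GRing.Theory Num.Theory.
Local Open Scope ring_scope.
Inductive pe := PC of nat | PV of nat | PA of pe & pe | PM of pe & pe | PN of pe.

Fixpoint den (R : ringType) (env : nat -> R) (p : pe) : R :=
  match p with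
  | PC n => n%:R | PV n => env n | PA x y => den env x + den env y
  | PM x y => den env x * den env y | PN x => - den env x end.

Definition isZ (p : pe) := if p is PC 0 then true else false.
Definition padd x y := if isZ x then y else if isZ y then x else PA x y.
Definition pneg x := if isZ x then x else if x is PN y then y else PN x.
Definition pmul x y :=
  if isZ x || isZ y then PC 0 else
  match x, y with
  | PC 1, _ => y | _, PC 1 => x
  | PN (PC 1), _ => pneg y | _, PN (PC 1) => pneg x
  | _, _ => PM x y end.
Definition pmulz x y := if isZ x then PC 0 else pmul x y.
Definition psign (n : nat) := if odd n then PN (PC 1) else PC 1.

Section Den.
Variables (R : comRingType) (env : nat -> R).
Local Notation den := (den env).
Lemma isZP x : isZ x -> den x = 0.
Proof. by case: x => // -[]. Qed.
Lemma paddE x y : den (padd x y) = den x + den y.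
Proof.
rewrite /padd; case: ifP => [/isZP->|_]; first by rewrite add0r.
by case: ifP => [/isZP->|_]; rewrite ?addr0.
Qed.
Lemma pnegE x : den (pneg x) = - den x.
Proof.
rewrite /pneg; case: ifP => [/isZP->|_]; first by rewrite oppr0.
by case: x => //= y; rewrite opprK.
Qed.
Lemma pmulE x y : den (pmul x y) = den x * den y.
Proof.
rewrite /pmul; case: ifP => [/orP[/isZP->|/isZP->]|/norP[]]; rewrite ?mul0r ?mulr0 //.
move=> _ _.
case: x => [[|[|n]]|n|a b|a b|[[|[|n]]|a|a b|a b|a]];
case: y => [[|[|n']]|n'|a' b'|a' b'|[[|[|n']]|a'|a' b'|a' b'|a']];
rewrite ?pnegE /= ?mul1r ?mulr1 ?mulN1r ?mulrN1 ?oppr0 //.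
Qed.
Lemma pmulzE x y : den (pmulz x y) = den x * den y.
Proof. by rewrite /pmulz; case: ifP => [/isZP->|_]; rewrite ?mul0r ?pmulE. Qed.
Lemma psignE n : den (psign n) = (-1) ^+ n.
Proof. by rewrite /psign; case: ifP => /= h; rewrite -signr_odd h /= ?expr1 ?expr0. Qed.

Definition psumL (s : seq nat) (f : nat -> pe) := foldr (fun i acc => padd (f i) acc) (PC 0) s.
Lemma psumLE s f : den (psumL s f) = \sum_(i <- s) den (f i).
Proof. by elim: s => [|x s IH]; rewrite ?big_nil ?big_cons //= paddE IH. Qed.
End Den.

Lemma sum_iota (R : nmodType) n (f : nat -> R) : \sum_(i <- iota 0 n) f i = \sum_(i < n) f i.
Proof. by rewrite -(big_mkord xpredT) /index_iota subn0. Qed.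

Definition nsumL (s : seq nat) (f : nat -> nat) := foldr (fun i acc => f i + acc)%N 0%N s.
Lemma nsumLE s f : nsumL s f = (\sum_(i <- s) f i)%N.
Proof. by elim: s => [|x s IH]; rewrite ?big_nil ?big_cons //= IH. Qed.
Lemma nsum_ord n f : (\sum_(i < n) f (val i))%N = nsumL (iota 0 n) f.
Proof. by rewrite nsumLE -(big_mkord xpredT) /index_iota subn0. Qed.

Lemma iota_all n (P : pred nat) : all P (iota 0 n) -> forall k, (k < n)%N -> P k.
Proof. by move=> /allP H k kn; apply: H; rewrite mem_iota. Qed.

Fixpoint bit (k i : nat) : bool := if i is i'.+1 then bit k./2 i' else odd k.
Definition sofm (k : nat) : {set 'I_7} := [set i : 'I_7 | bit k i].
Definition mofs (K : {set 'I_7}) : nat := (\sum_(i < 7) (i \in K) * 2 ^ i)%N.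

Lemma mofs_sofm k : (k < 128)%N -> mofs (sofm k) = k.
Proof.
move=> kl; rewrite /mofs; under eq_bigr => i _ do rewrite inE.
rewrite (nsum_ord 7 (fun i => bit k i * 2 ^ i)%N).
apply/eqP; move: k kl.
by apply: (iota_all (P := fun k => _ == k)); vm_compute.
Qed.

Lemma sofm_inj : injective (fun k : 'I_128 => sofm k).
Proof. by move=> k k' /(congr1 mofs); rewrite !mofs_sofm // => /val_inj. Qed.
Lemma card_sets : #|{set 'I_7}| = 128%N.
Proof. by rewrite -cardsT -powersetT card_powerset cardsT card_ord. Qed.
Lemma sofm_bij : bijective (fun k : 'I_128 => sofm k).
Proof. by apply: inj_card_bij sofm_inj _; rewrite card_sets card_ord. Qed.
Lemma sofm_surj K : exists2 k, (k < 128)%N & K = sofm k.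
Proof. have [g h1 h2] := sofm_bij; exists (g K) => //; by rewrite h2. Qed.
Lemma sofm_mofs K : sofm (mofs K) = K.
Proof. by case: (sofm_surj K) => k kl ->; rewrite mofs_sofm. Qed.
Lemma mofs_lt K : (mofs K < 128)%N.
Proof. by case: (sofm_surj K) => k kl ->; rewrite mofs_sofm. Qed.
Lemma sum_sets (R : nmodType) (F : {set 'I_7} -> R) :
  \sum_K F K = \sum_(k < 128) F (sofm k).
Proof. rewrite (reindex (fun k : 'I_128 => sofm k)). by []. exact: onW_bij sofm_bij. Qed.
Lemma sofm_eq k k' : (k < 128)%N -> (k' < 128)%N -> (sofm k == sofm k') = (k == k').
Proof.
move=> kl kl'; apply/eqP/eqP => [/(congr1 mofs)|->//].
by rewrite !mofs_sofm.
Qed.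

Lemma forall7 (P : nat -> bool) : [forall t : 'I_7, P t] = all P (iota 0 7).
Proof.
apply/forallP/allP => [H t|H t]; last by apply: H; rewrite mem_iota add0n ltn_ord.
by rewrite mem_iota add0n => tl; exact: (H (Ordinal tl)).
Qed.
Lemma eqsetE (A B : {set 'I_7}) : (A == B) = [forall t, (t \in A) == (t \in B)].
Proof.
apply/eqP/forallP => [-> t|H]; first by rewrite eqxx.
by apply/setP => t; exact/eqP/H.
Qed.

Definition ninv (I J : nat) : nat :=
  nsumL (iota 0 7) (fun a => nsumL (iota 0 7) (fun b => bit I a && bit J b && (b < a)%N)).
Definition npos (K i : nat) : nat := nsumL (iota 0 7) (fun l => bit K l && (l < i)%N).
Definition popc (K : nat) : nat := nsumL (iota 0 7) (fun l => bit K l).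

Lemma card_sum (P : pred 'I_7) : #|[set l | P l]| = (\sum_(l < 7) P l)%N.
Proof.
rewrite -sum1_card big_mkcond /=; apply: eq_bigr => l _; rewrite inE.
by case: (P l).
Qed.

Lemma sgn_pairE (R : realType) I J :
  sgn_pair R (sofm I) (sofm J) = (-1) ^+ ninv I J.
Proof.
rewrite /sgn_pair; congr (_ ^+ _).
rewrite -sum1_card big_mkcond /=.
rewrite /ninv -(nsum_ord 7).
transitivity (\sum_(a < 7) \sum_(b < 7) ((bit I a && bit J b && (b < a)%N) : nat))%N; last first.
  by apply: eq_bigr => a _; rewrite (nsum_ord 7 (fun b => (bit I a && bit J b && (b < a)%N) : nat)).
rewrite pair_bigA; apply: eq_bigr => -[a b] _.
by rewrite !inE /=; case: (bit I a); case: (bit J b); case: (b < a)%N.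
Qed.

Lemma posE K (i : 'I_7) : pos (sofm K) i = npos K i.
Proof.
rewrite /pos /npos -(nsum_ord 7) -sum1_card big_mkcond /=; apply: eq_bigr => l _.
by rewrite !inE; case: (bit K l); case: (l < i)%N.
Qed.

Lemma cardE' K : #|sofm K| = popc K.
Proof.
rewrite /popc -(nsum_ord 7) -sum1_card big_mkcond /=; apply: eq_bigr => l _.
by rewrite !inE; case: (bit K l).
Qed.

Lemma chkN n1 n2 (P : nat -> nat -> bool) :
  all (fun k => all (P k) (iota 0 n2)) (iota 0 n1) -> forall k t, (k < n1)%N -> (t < n2)%N -> P k t.
Proof. by move=> H k t kl tl; move: (iota_all H kl) => /iota_all; apply. Qed.

Lemma compl_sofm k : (k < 128)%N -> ~: sofm k = sofm (127 - k).
Proof.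
move=> kl; apply/setP => t; rewrite !inE.
have H := chkN (n1 := 128) (n2 := 7) (P := fun k t => ~~ bit k t == bit (127 - k) t) ltac:(by vm_compute).
exact: (eqP (H _ _ kl (ltn_ord t))).
Qed.
Lemma sub127_lt k : (127 - k < 128)%N.
Proof. by rewrite ltnS leq_subr. Qed.

Lemma set1_sofm (i : 'I_7) : [set i] = sofm (2 ^ i).
Proof.
apply/setP => t; rewrite !inE -val_eqE.
have H := chkN (n1 := 7) (n2 := 7) (P := fun i t => (t == i) == bit (2 ^ i) t) ltac:(by vm_compute).
exact: (eqP (H _ _ (ltn_ord i) (ltn_ord t))).
Qed.

Lemma setU1_sofm (m : 'I_7) J : (J < 128)%N -> ~~ bit J m ->
  (J + 2 ^ m < 128)%N /\ m |: sofm J = sofm (J + 2 ^ m).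
Proof.
move=> Jl nb.
have H := chkN (n1 := 128) (n2 := 7) (P := fun J m => bit J m ||
  ((J + 2 ^ m < 128)%N && all (fun t => bit (J + 2 ^ m) t == ((t == m) || bit J t)) (iota 0 7)))
  ltac:(by vm_compute).
move: (H _ _ Jl (ltn_ord m)); rewrite (negbTE nb) orFb => /andP[-> Hall]; split => //.
apply/setP => t; rewrite !inE -val_eqE.
have Ht : val t \in iota 0 7 by rewrite mem_iota add0n ltn_ord.
by have /eqP -> := allP Hall _ Ht.
Qed.

Definition ndel (K i : nat) : nat := if bit K i then (K - 2 ^ i)%N else K.

Lemma setD1_sofm K (i : 'I_7) : (K < 128)%N ->
  (ndel K i < 128)%N /\ sofm K :\ i = sofm (ndel K i).
Proof.
move=> Kl.
have H := chkN (n1 := 128) (n2 := 7) (P := fun K i =>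
  ((ndel K i < 128)%N && all (fun t => bit (ndel K i) t == ((t != i) && bit K t)) (iota 0 7)))
  ltac:(by vm_compute).
move: (H _ _ Kl (ltn_ord i)) => /andP[-> Hall]; split => //.
apply/setP => t; rewrite !inE -val_eqE.
have Ht : val t \in iota 0 7 by rewrite mem_iota add0n ltn_ord.
by have /eqP -> := allP Hall _ Ht.
Qed.

Definition ndisj (I J : nat) := all (fun t => (bit I t && bit J t) == false) (iota 0 7).
Definition nun (I J K : nat) := all (fun t => (bit I t || bit J t) == bit K t) (iota 0 7).

Lemma disjE I J : (sofm I :&: sofm J == set0) = ndisj I J.
Proof.
rewrite eqsetE /ndisj -(forall7 (fun t => (bit I t && bit J t) == false)).
by apply: eq_forallb => t; rewrite !inE.
Qed.
Lemma unE I J K : (sofm I :|: sofm J == sofm K) = nun I J K.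
Proof.
rewrite eqsetE /nun -(forall7 (fun t => (bit I t || bit J t) == bit K t)).
by apply: eq_forallb => t; rewrite !inE.
Qed.

Definition mkT (f : nat -> pe) : seq pe := map f (iota 0 128).
Definition atL (L : seq pe) k := nth (PC 0) L k.
Lemma atL_mkT f k : (k < 128)%N -> atL (mkT f) k = f k.
Proof. by move=> kl; rewrite /atL (nth_map 0%N) ?size_iota // nth_iota. Qed.

Definition cadd (a b : seq pe) := mkT (fun k => padd (atL a k) (atL b k)).
Definition cneg (a : seq pe) := mkT (fun k => pneg (atL a k)).
Definition cscale (p : pe) (a : seq pe) := mkT (fun k => pmul p (atL a k)).
Definition cEb (k0 : nat) := mkT (fun k => if k == k0 then PC 1 else PC 0).
Definition chodge (a : seq pe) := mkT (fun k => pmul (psign (ninv (127 - k) k)) (atL a (127 - k))).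
Definition nsub (I K : nat) := all (fun t => bit I t ==> bit K t) (iota 0 7).
Definition cwedge (a b : seq pe) := mkT (fun K =>
  psumL (iota 0 128) (fun I => if isZ (atL a I) then PC 0 else
    if nsub I K then pmul (psign (ninv I (K - I)%N)) (pmul (atL a I) (atL b (K - I)%N)) else PC 0)).

Lemma diffK I K : (I < 128)%N -> (K < 128)%N -> nsub I K ->
  (K - I < 128)%N /\ forall t, (t < 7)%N -> bit (K - I)%N t = bit K t && ~~ bit I t.
Proof.
move=> Il Kl hs.
have H := chkN (n1 := 128) (n2 := 128) (P := fun I K => nsub I K ==>
  ((K - I < 128)%N && all (fun t => bit (K - I)%N t == bit K t && ~~ bit I t) (iota 0 7)))
  ltac:(by vm_compute).
move: (H _ _ Il Kl); rewrite hs implyTb => /andP[-> Hall]; split => // t tl.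
have ht : t \in iota 0 7 by rewrite mem_iota add0n.
by have /eqP -> := allP Hall _ ht.
Qed.

Lemma wcond I J K : (I < 128)%N -> (J < 128)%N -> (K < 128)%N ->
  (sofm I :&: sofm J == set0) && (sofm I :|: sofm J == sofm K) = nsub I K && (J == (K - I)%N).
Proof.
move=> Il Jl Kl; rewrite disjE unE /ndisj /nun -all_predI.
case hs: (nsub I K); rewrite ?andTb ?andFb.
  have [hl hb] := diffK Il Kl hs.
  rewrite -sofm_eq // eqsetE.
  rewrite (_ : [forall t, _] = all (fun t => bit J t == bit (K - I)%N t) (iota 0 7)); last first.
    by rewrite -forall7; apply: eq_forallb => t; rewrite !inE.
  apply: eq_in_all => t; rewrite mem_iota add0n => tl /=.
  have ht : t \in iota 0 7 by rewrite mem_iota add0n.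
  rewrite (hb _ tl); move: (allP hs _ ht) => /=.
  by case: (bit I t); case: (bit J t); case: (bit K t).
apply/negbTE/negP => /allP H; move/negP: hs; apply; apply/allP => t ht.
by move: (H t ht) => /=; case: (bit I t); case: (bit J t); case: (bit K t).
Qed.

Definition nnidx (i : nat) : option nat := if (2 <= i)%N && (i <= 5)%N then Some (i - 2)%N else None.
Definition nadm (mA mB mC : nat -> nat -> pe) (i : nat) :=
  if i == 6 then Some mA else if i == 0 then Some mB else if i == 1 then Some mC else None.
Definition nsc mA mB mC (m i j : nat) : pe :=
  padd (match nadm mA mB mC i, nnidx j, nnidx m with
        | Some M, Some j', Some m' => M m' j' | _, _, _ => PC 0 end)
   (pneg (match nadm mA mB mC j, nnidx i, nnidx m with
        | Some M, Some i', Some m' => M m' i' | _, _, _ => PC 0 end)).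
Definition nevalm (a : seq pe) (m J : nat) :=
  if bit J m then PC 0 else pmul (psign (ninv (2 ^ m) J)) (atL a (J + 2 ^ m)).
Definition cddK mA mB mC (a : seq pe) (K : nat) :=
  psumL (iota 0 7) (fun i => if bit K i then psumL (iota 0 7) (fun j =>
    if bit K j && (i < j)%N then
      pmul (psign (npos K i + npos K j))
        (psumL (iota 0 7) (fun m => pmulz (nsc mA mB mC m i j) (nevalm a m (ndel (ndel K i) j))))
    else PC 0) else PC 0).
Definition cdd mA mB mC a := mkT (cddK mA mB mC a).
Definition cdstar mA mB mC a := let h := chodge (cdd mA mB mC (chodge a)) in
  mkT (fun k => pmul (psign (popc k).+1) (atL h k)).
Definition clap mA mB mC a := cadd (cdd mA mB mC (cdstar mA mB mC a)) (cdstar mA mB mC (cdd mA mB mC a)).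

Section Forms.
Variables (R : realType) (env : nat -> R).
Local Notation den := (den env).
Definition denF_def (L : seq pe) : lform R := [ffun K => den (atL L (mofs K))].
Fact denF_key : unit. Proof. exact: tt. Qed.
Definition denF := locked_with denF_key denF_def.
Lemma denFE L K : denF L K = den (atL L (mofs K)).
Proof. by rewrite [denF]unlock ffunE. Qed.
Lemma denF_sofm L k : (k < 128)%N -> denF L (sofm k) = den (atL L k).
Proof. by move=> kl; rewrite denFE mofs_sofm. Qed.
Lemma lform_ext (F G : lform R) : (forall k, (k < 128)%N -> F (sofm k) = G (sofm k)) -> F = G.
Proof. by move=> H; apply/ffunP => K; rewrite -(sofm_mofs K); apply: H; exact: mofs_lt. Qed.

Lemma caddE a b : denF a + denF b = denF (cadd a b).
Proof. by apply: lform_ext => k kl; rewrite !ffunE !denFE !mofs_sofm // atL_mkT // paddE. Qed.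
Lemma cnegE a : - denF a = denF (cneg a).
Proof. by apply: lform_ext => k kl; rewrite !ffunE !denFE !mofs_sofm // atL_mkT // pnegE. Qed.
Lemma cscaleE c p a : den p = c -> c *: denF a = denF (cscale p a).
Proof. by move=> <-; apply: lform_ext => k kl; rewrite !ffunE !denFE !mofs_sofm // atL_mkT // pmulE. Qed.
Lemma cEbE k0 : (k0 < 128)%N -> eb R (sofm k0) = denF (cEb k0).
Proof.
move=> k0l; apply: lform_ext => k kl; rewrite !ffunE !denFE !mofs_sofm // atL_mkT // sofm_eq //.
by case: eqP.
Qed.
Lemma chodgeE a : hodge (denF a) = denF (chodge a).
Proof.
apply: lform_ext => k kl; rewrite !ffunE !denFE !mofs_sofm // atL_mkT // pmulE psignE.
by rewrite compl_sofm // sgn_pairE mofs_sofm ?sub127_lt.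
Qed.
Lemma cwedgeE a b : wedge (denF a) (denF b) = denF (cwedge a b).
Proof.
apply: lform_ext => K Kl; rewrite ffunE denF_sofm // atL_mkT // psumLE sum_iota sum_sets.
apply: eq_bigr => I _; rewrite denF_sofm //.
case: ifP => hz.
  by rewrite (isZP _ hz) big1 // => J _; rewrite mulr0 mul0r.
rewrite big_mkcond sum_sets.
under eq_bigr => J _ do rewrite wcond //.
case hs: (nsub I K) => /=; last by rewrite big1.
have [hl _] := diffK (ltn_ord I) Kl hs.
rewrite (bigD1 (Ordinal hl)) //= eqxx big1 ?addr0; last first.
  by move=> J hJ; case: eqP => // hJ'; move: hJ; rewrite -val_eqE /= hJ' eqxx.
by rewrite pmulE psignE pmulE sgn_pairE denF_sofm // mulrA.
Qed.

Definition mxrep (A : 'M[R]_4) (mA : nat -> nat -> pe) := forall p q : 'I_4, A p q = den (mA p q).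

Lemma scE A B C mA mB mC : mxrep A mA -> mxrep B mB -> mxrep C mC ->
  forall m i j : 'I_7, sc A B C m i j = den (nsc mA mB mC m i j).
Proof.
move=> hA hB hC m i j; rewrite /sc paddE pnegE.
have H : forall (x y : 'I_7),
  match adm A B C x, nidx y, nidx m with Some M, Some j', Some m' => M m' j' | _, _, _ => 0 end =
  den (match nadm mA mB mC x, nnidx y, nnidx m with Some M, Some j', Some m' => M m' j' | _, _, _ => PC 0 end).
  move=> x y; case: x => [[|[|[|[|[|[|[|x]]]]]]] xl] //; rewrite /adm /nadm /nidx /nnidx /=;
  case hy: (1 < y <= 5)%N; case hm: (1 < m <= 5)%N => //=; rewrite ?hA ?hB ?hC !inordK //; lia.
by rewrite !H.
Qed.
Lemma evalmE a (m : 'I_7) J : (J < 128)%N -> evalm (denF a) m (sofm J) = den (nevalm a m J).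
Proof.
move=> Jl; rewrite /evalm /nevalm inE; case: ifP => hb //=.
have [Hl E] := setU1_sofm (m := m) Jl (negbT hb).
by rewrite E set1_sofm sgn_pairE denF_sofm // pmulE psignE.
Qed.

Section DD.
Variables (A B C : 'M[R]_4) (mA mB mC : nat -> nat -> pe).
Hypotheses (hA : mxrep A mA) (hB : mxrep B mB) (hC : mxrep C mC).

Lemma cddE a : dd A B C (denF a) = denF (cdd mA mB mC a).
Proof.
apply: lform_ext => K Kl; rewrite ffunE denF_sofm // atL_mkT //.
rewrite /cddK psumLE sum_iota big_mkcond; apply: eq_bigr => i _; rewrite inE.
case: (bit K i) => //.
rewrite psumLE sum_iota big_mkcond; apply: eq_bigr => j _; rewrite inE.
case: (bit K j && (i < j)%N) => //.
rewrite pmulE psignE !posE psumLE sum_iota; congr (_ * _); apply: eq_bigr => m _.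
rewrite pmulzE -(scE hA hB hC); congr (_ * _).
have [Hl1 E1] := setD1_sofm i Kl; have [Hl2 E2] := setD1_sofm j Hl1.
by rewrite E1 E2 evalmE.
Qed.

Lemma cdstarE a : dstar A B C (denF a) = denF (cdstar mA mB mC a).
Proof.
apply: lform_ext => k kl; rewrite ffunE chodgeE cddE chodgeE denF_sofm //.
by rewrite /cdstar; cbv zeta; rewrite denF_sofm // atL_mkT // pmulE psignE cardE'.
Qed.

Lemma clapE a : lap A B C (denF a) = denF (clap mA mB mC a).
Proof. by rewrite /lap /clap cdstarE cddE cddE cdstarE caddE. Qed.
End DD.
End Forms.

Fixpoint peq (x y : pe) : bool := match x, y with
 | PC n, PC m => n == m | PV n, PV m => n == m
 | PA a b, PA c d => peq a c && peq b d | PM a b, PM c d => peq a c && peq b d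
 | PN a, PN c => peq a c | _, _ => false end.
Lemma peqP x y : peq x y -> x = y.
Proof.
elim: x y => [n|n|a IHa b IHb|a IHa b IHb|a IHa] [m|m|c d|c d|c] //=;
  try by move=> /eqP->.
- by move=> /andP[/IHa-> /IHb->].
- by move=> /andP[/IHa-> /IHb->].
- by move=> /IHa->.
Qed.
Fixpoint diffsL (l1 l2 : seq pe) : seq (pe * pe) := match l1, l2 with
 | x :: l1', y :: l2' => if peq x y then diffsL l1' l2' else (x, y) :: diffsL l1' l2'
 | _, _ => [::] end.
Definition alleq (R : realType) (env : nat -> R) (l : seq (pe * pe)) : Prop :=
  foldr (fun p acc => den env p.1 = den env p.2 /\ acc) True l.
Lemma diffsP (R : realType) (env : nat -> R) l1 l2 : size l1 = size l2 ->
  alleq env (diffsL l1 l2) -> forall k, den env (atL l1 k) = den env (atL l2 k).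
Proof.
elim: l1 l2 => [|x l1 IH] [|y l2] //= [] hs.
case: ifP => hp /=.
  by move=> H [|k] /=; [rewrite (peqP hp) | exact: IH].
by move=> [h1 H] [|k] /=; [exact: h1 | exact: IH].
Qed.
Lemma denF_eqD (R : realType) (env : nat -> R) a b :
  alleq env (diffsL (mkT (atL a)) (mkT (atL b))) -> denF env a = denF env b.
Proof.
move=> H; apply: lform_ext => k kl; rewrite !denF_sofm //.
rewrite -(atL_mkT (atL a) kl) -(atL_mkT (atL b) kl).
by apply: (diffsP _ H); rewrite !size_map.
Qed.
Lemma denF0 (R : realType) (env : nat -> R) : denF env (mkT (fun _ => PC 0)) = 0.
Proof. by apply: lform_ext => k kl; rewrite denF_sofm // atL_mkT // ffunE. Qed.

Definition dg (l : seq pe) (p q : nat) := if p == q then nth (PC 0) l p else PC 0.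
Lemma mxrep_Diag4 (R : realType) (env : nat -> R) x0 x1 x2 x3 l :
  (forall i, (i < 4)%N -> den env (nth (PC 0) l i) = nth 0 [:: x0; x1; x2; x3] i) ->
  mxrep env (Diag4 x0 x1 x2 x3) (dg l).
Proof.
move=> H p q; rewrite /Diag4 /diag_mx mxE /dg -val_eqE /=.
case: eqP => [/val_inj ->|]; rewrite ?mulr1n ?mulr0n ?mxE // H //.
Qed.

Lemma cEb1E (R : realType) (env : nat -> R) (i : 'I_7) : eb R [set i] = denF env (cEb (2 ^ i)).
Proof.
rewrite set1_sofm (cEbE env) //.
have H := iota_all (n := 7) (P := fun i => (2 ^ i < 128)%N) ltac:(by vm_compute).
exact: H (ltn_ord i).
Qed.

Section Reif.
Variables (R : realType) (env : nat -> R).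
Local Notation dF := (denF env).
Lemma R_add x y a b : x = dF a -> y = dF b -> x + y = dF (cadd a b).
Proof. by move=> -> ->; exact: caddE. Qed.
Lemma R_opp x a : x = dF a -> - x = dF (cneg a).
Proof. by move=> ->; exact: cnegE. Qed.
Lemma R_wedge x y a b : x = dF a -> y = dF b -> wedge x y = dF (cwedge a b).
Proof. by move=> -> ->; exact: cwedgeE. Qed.
Lemma R_hodge x a : x = dF a -> hodge x = dF (chodge a).
Proof. by move=> ->; exact: chodgeE. Qed.
Lemma R_scale c p x a : den env p = c -> x = dF a -> c *: x = dF (cscale p a).
Proof. by move=> hp ->; exact: cscaleE. Qed.
Lemma R_eb1 (i : 'I_7) : eb R [set i] = dF (cEb (2 ^ i)).
Proof. exact: cEb1E. Qed.
Lemma R_zero : (0 : lform R) = dF (mkT (fun _ => PC 0)).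
Proof. by rewrite denF0. Qed.
Section M.
Variables (A B C : 'M[R]_4) (mA mB mC : nat -> nat -> pe).
Hypotheses (hA : mxrep env A mA) (hB : mxrep env B mB) (hC : mxrep env C mC).
Lemma R_dd x a : x = dF a -> dd A B C x = dF (cdd mA mB mC a).
Proof. by move=> ->; exact: cddE. Qed.
Lemma R_dstar x a : x = dF a -> dstar A B C x = dF (cdstar mA mB mC a).
Proof. by move=> ->; exact: cdstarE. Qed.
Lemma R_lap x a : x = dF a -> lap A B C x = dF (clap mA mB mC a).
Proof. by move=> ->; exact: clapE. Qed.
End M.
End Reif.
Lemma alleq_eq (R : realType) (env : nat -> R) t v : t = v -> alleq env v -> alleq env t.
Proof. by move=> ->. Qed.
Lemma denF_eqV (R : realType) (env : nat -> R) a b v :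
  diffsL (mkT (atL a)) (mkT (atL b)) = v -> alleq env v -> denF env a = denF env b.
Proof. by move=> E H; apply: denF_eqD; rewrite E. Qed.
Lemma is_deg_eq (R : realType) (env : nat -> R) x L n :
  x = denF env L -> all (fun k => (popc k == n) || isZ (atL L k)) (iota 0 128) -> is_deg n x.
Proof.
move=> -> H K; rewrite -(sofm_mofs K) cardE' denF_sofm ?mofs_lt // => hn.
have := iota_all H (mofs_lt K); rewrite (negbTE hn) /= => /isZP; exact.
Qed.
Lemma wedge0l (R : realType) (x : lform R) : wedge 0 x = 0.
Proof.
apply/ffunP => K; rewrite !ffunE big1 // => I _; rewrite big1 // => J _.
by rewrite ffunE mulr0 mul0r.
Qed.

Definition mA2 := dg [:: PV 0; PN (PV 0); PV 1; PN (PV 1)].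
Definition mB2 := dg [:: PV 2; PV 3; PN (PV 2); PN (PV 3)].
Definition mC2 := dg [:: PV 4; PV 5; PN (PV 5); PN (PV 4)].

Definition env6 (R : realType) (a1 a2 b1 b2 c1 c2 : R) : nat -> R :=
  fun n => nth 0 [:: a1; a2; b1; b2; c1; c2] n.
Ltac reifR a1 a2 b1 b2 c1 c2 t :=
  lazymatch t with
  | ?x + ?y => let p := reifR a1 a2 b1 b2 c1 c2 x in let q := reifR a1 a2 b1 b2 c1 c2 y in constr:(PA p q)
  | - ?x => let p := reifR a1 a2 b1 b2 c1 c2 x in constr:(PN p)
  | ?x * ?y => let p := reifR a1 a2 b1 b2 c1 c2 x in let q := reifR a1 a2 b1 b2 c1 c2 y in constr:(PM p q)
  | ?x ^+ 2 => let p := reifR a1 a2 b1 b2 c1 c2 x in constr:(PM p p)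
  | _ => lazymatch constr:((t, a1, a2, b1, b2, c1, c2)) with
         | (?u, ?u, _, _, _, _, _) => constr:(PV 0)
         | (?u, _, ?u, _, _, _, _) => constr:(PV 1)
         | (?u, _, _, ?u, _, _, _) => constr:(PV 2)
         | (?u, _, _, _, ?u, _, _) => constr:(PV 3)
         | (?u, _, _, _, _, ?u, _) => constr:(PV 4)
         | (?u, _, _, _, _, _, ?u) => constr:(PV 5)
         end
  end.

Ltac rf env hA hB hC a1 a2 b1 b2 c1 c2 t :=
  let r x := rf env hA hB hC a1 a2 b1 b2 c1 c2 x in
  lazymatch t with
  | ?x + ?y => let px := r x in let py := r y in constr:(R_add px py)
  | - ?x => let px := r x in constr:(R_opp px)
  | wedge ?x ?y => let px := r x in let py := r y in constr:(R_wedge px py)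
  | hodge ?x => let px := r x in constr:(R_hodge px)
  | dd _ _ _ ?x => let px := r x in constr:(R_dd hA hB hC px)
  | dstar _ _ _ ?x => let px := r x in constr:(R_dstar hA hB hC px)
  | lap _ _ _ ?x => let px := r x in constr:(R_lap hA hB hC px)
  | eb _ [set ?i] => constr:(R_eb1 env i)
  | ?c *: ?x => let px := r x in let p := reifR a1 a2 b1 b2 c1 c2 c in
                constr:(R_scale (env := env) (p := p) (erefl c) px)
  | 0 => constr:(R_zero env)
  end.

Ltac reify_goal env hA hB hC a1 a2 b1 b2 c1 c2 :=
  rewrite /psi /phi /om7 /om1 /om2 /om7b /om1b /om2b /e12 /e17 /e27 /e3 /e2f /e1 /e2 /e7;
  lazymatch goal with |- ?l = ?r =>
    let pl := rf env hA hB hC a1 a2 b1 b2 c1 c2 l in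
    let pr := rf env hA hB hC a1 a2 b1 b2 c1 c2 r in
    refine (eq_trans pl (eq_trans _ (esym pr)))
  end.

Ltac finish :=
  lazymatch goal with |- denF ?env ?a = denF ?env ?b =>
    let v := eval vm_compute in (diffsL (mkT (atL a)) (mkT (atL b))) in
    refine (denF_eqV (v := v) _ _); [vm_compute; reflexivity | ]
  end;
  rewrite /alleq; cbn [foldr fst snd den env6 nth];
  repeat split; ring.

Lemma setup2L (R : realType) (a1 a2 b1 b2 c1 c2 : R) :
  let env := env6 a1 a2 b1 b2 c1 c2 in
  [/\ mxrep env (Diag4 a1 (- a1) a2 (- a2)) mA2, mxrep env (Diag4 b1 b2 (- b1) (- b2)) mB2
    & mxrep env (Diag4 c1 c2 (- c2) (- c1)) mC2].
Proof. by split; apply: mxrep_Diag4 => -[|[|[|[|?]]]]. Qed.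

Ltac setup2 a1 a2 b1 b2 c1 c2 env hA hB hC :=
  have [hA hB hC] := setup2L a1 a2 b1 b2 c1 c2.

Lemma part2_dpsi (R : realType) (a1 a2 b1 b2 c1 c2 : R) :
  dd (Diag4 a1 (- a1) a2 (- a2)) (Diag4 b1 b2 (- b1) (- b2)) (Diag4 c1 c2 (- c2) (- c1)) (psi R) = 0.
Proof.
have [hA hB hC] := setup2L a1 a2 b1 b2 c1 c2.
reify_goal (env6 a1 a2 b1 b2 c1 c2) hA hB hC a1 a2 b1 b2 c1 c2.
finish.
Qed.

Section P2.
Variables (R : realType) (a1 a2 b1 b2 c1 c2 : R).
Let A := Diag4 a1 (- a1) a2 (- a2).
Let B := Diag4 b1 b2 (- b1) (- b2).
Let C := Diag4 c1 c2 (- c2) (- c1).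
Let t3 : lform R :=
       wedge (- (b1 + b2) *: om7b R + (a1 + a2) *: om1b R) (e2 R) +
       wedge ((c1 + c2) *: om7b R - (a1 - a2) *: om2b R) (e1 R) +
       wedge ((b1 - b2) *: om2b R - (c1 - c2) *: om1b R) (e7 R).

Lemma p2_deg : is_deg 3 t3.
Proof.
have [hA hB hC] := setup2L a1 a2 b1 b2 c1 c2.
rewrite /t3 /om7b /om1b /om2b /e3 /e2f /e1 /e2 /e7.
lazymatch goal with |- is_deg _ ?x =>
  let px := rf (env6 a1 a2 b1 b2 c1 c2) hA hB hC a1 a2 b1 b2 c1 c2 x in
  refine (is_deg_eq px _); vm_compute; reflexivity
end.
Qed.

Lemma p2_wphi : wedge t3 (phi R) = 0.
Proof.
have [hA hB hC] := setup2L a1 a2 b1 b2 c1 c2.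
rewrite /t3; reify_goal (env6 a1 a2 b1 b2 c1 c2) hA hB hC a1 a2 b1 b2 c1 c2; finish.
Qed.
Lemma p2_wpsi : wedge t3 (psi R) = 0.
Proof.
have [hA hB hC] := setup2L a1 a2 b1 b2 c1 c2.
rewrite /t3; reify_goal (env6 a1 a2 b1 b2 c1 c2) hA hB hC a1 a2 b1 b2 c1 c2; finish.
Qed.
Lemma p2_dphi : dd A B C (phi R) = hodge t3.
Proof.
have [hA hB hC] := setup2L a1 a2 b1 b2 c1 c2.
rewrite /t3; reify_goal (env6 a1 a2 b1 b2 c1 c2) hA hB hC a1 a2 b1 b2 c1 c2; finish.
Qed.
Lemma p2_L1 : lap A B C (phi R) = dstar A B C (dd A B C (phi R)).
Proof.
have [hA hB hC] := setup2L a1 a2 b1 b2 c1 c2.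
reify_goal (env6 a1 a2 b1 b2 c1 c2) hA hB hC a1 a2 b1 b2 c1 c2; finish.
Qed.
Lemma p2_L2 : lap A B C (psi R) = dd A B C t3.
Proof.
have [hA hB hC] := setup2L a1 a2 b1 b2 c1 c2.
rewrite /t3; reify_goal (env6 a1 a2 b1 b2 c1 c2) hA hB hC a1 a2 b1 b2 c1 c2; finish.
Qed.
Lemma p2_L3 : lap A B C (psi R) = hodge (lap A B C (phi R)).
Proof.
have [hA hB hC] := setup2L a1 a2 b1 b2 c1 c2.
reify_goal (env6 a1 a2 b1 b2 c1 c2) hA hB hC a1 a2 b1 b2 c1 c2; finish.
Qed.
Lemma p2_L4 : lap A B C (phi R) =
           ((b1 + b2) ^+ 2 + (c1 + c2) ^+ 2) *: wedge (om7 R) (e7 R) +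
           ((b1 - b2) ^+ 2 + (a1 - a2) ^+ 2) *: wedge (om2 R) (e2 R) +
           ((c1 - c2) ^+ 2 + (a1 + a2) ^+ 2) *: wedge (om1 R) (e1 R).
Proof.
have [hA hB hC] := setup2L a1 a2 b1 b2 c1 c2.
reify_goal (env6 a1 a2 b1 b2 c1 c2) hA hB hC a1 a2 b1 b2 c1 c2; finish.
Qed.
Lemma p2_L5 : lap A B C (psi R) =
           ((b1 + b2) ^+ 2 + (c1 + c2) ^+ 2) *: wedge (om7 R) (e12 R) -
           ((b1 - b2) ^+ 2 + (a1 - a2) ^+ 2) *: wedge (om2 R) (e17 R) +
           ((c1 - c2) ^+ 2 + (a1 + a2) ^+ 2) *: wedge (om1 R) (e27 R).
Proof.
have [hA hB hC] := setup2L a1 a2 b1 b2 c1 c2.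
reify_goal (env6 a1 a2 b1 b2 c1 c2) hA hB hC a1 a2 b1 b2 c1 c2; finish.
Qed.
End P2.

Definition envA (R : realType) (A B C : 'M[R]_4) : nat -> R := fun n =>
  nth 0 [:: A 0 0; A 1 1; A 2 2; A 3 3; B 0 0; B 1 1; B 2 2; B 3 3; C 0 0; C 1 1; C 2 2; C 3 3] n.
Definition mA1 := dg [:: PV 0; PV 1; PV 2; PV 3].
Definition mB1 := dg [:: PV 4; PV 5; PV 6; PV 7].
Definition mC1 := dg [:: PV 8; PV 9; PV 10; PV 11].

Lemma mxrep_diag (R : realType) (env : nat -> R) (M : 'M[R]_4) l : is_diag_mx M ->
  (forall i, (i < 4)%N -> den env (nth (PC 0) l i) = M (inord i) (inord i)) -> mxrep env M (dg l).
Proof.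
move=> /is_diag_mxP hd H p q; rewrite /dg; case: eqP => [e|ne].
  by have pq : p = q := val_inj e; subst; rewrite H // inord_val.
by rewrite hd //; apply/eqP.
Qed.

Lemma mxrep1 (R : realType) (A B C : 'M[R]_4) :
  is_diag_mx A -> is_diag_mx B -> is_diag_mx C ->
  [/\ mxrep (envA A B C) A mA1, mxrep (envA A B C) B mB1 & mxrep (envA A B C) C mC1].
Proof.
move=> dA dB dC; split.
- apply: (@mxrep_diag R (envA A B C) A [:: PV 0; PV 1; PV 2; PV 3] dA).
  case=> [|[|[|[|?]]]] //= _; by congr (A _ _); apply/val_inj; rewrite /= inordK.
- apply: (@mxrep_diag R (envA A B C) B [:: PV 4; PV 5; PV 6; PV 7] dB).
  case=> [|[|[|[|?]]]] //= _; by congr (B _ _); apply/val_inj; rewrite /= inordK.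
- apply: (@mxrep_diag R (envA A B C) C [:: PV 8; PV 9; PV 10; PV 11] dC).
  case=> [|[|[|[|?]]]] //= _; by congr (C _ _); apply/val_inj; rewrite /= inordK.
Qed.

Lemma diag_Diag4 (R : realType) (A : 'M[R]_4) : is_diag_mx A -> A = Diag4 (A 0 0) (A 1 1) (A 2 2) (A 3 3).
Proof.
move=> /is_diag_mxP hd; apply/matrixP => p q; rewrite /Diag4 !mxE.
case: (p =P q) => [<-|ne].
  by rewrite mulr1n; case: p => -[|[|[|[|?]]]] //= pl; congr (A _ _); apply/val_inj.
by rewrite mulr0n hd //; apply/eqP => /val_inj.
Qed.

Lemma den_at (R : realType) (env : nat -> R) L : denF env L = 0 ->
  forall k, (k < 128)%N -> den env (atL L k) = 0.
Proof. by move=> H k kl; rewrite -denF_sofm // H ffunE. Qed.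
Lemma at_val (R : realType) (env : nat -> R) L k v : atL L k = v -> den env (atL L k) = 0 -> den env v = 0.
Proof. by move=> ->. Qed.

Ltac getk H k :=
  let e := fresh "e" in
  have e := den_at H (k := k) isT;
  lazymatch type of e with den _ (atL ?L _) = 0 =>
    let v := eval vm_compute in (atL L k) in
    have := at_val (L := L) (k := k) (v := v) ltac:(vm_compute; reflexivity) e
  end; clear e; cbn [den envA nth].

Lemma part1_fwd (R : realType) (A B C : 'M[R]_4) :
  is_diag_mx A -> is_diag_mx B -> is_diag_mx C -> dd A B C (psi R) = 0 ->
   exists a1 a2 b1 b2 c1 c2 : R,
     [/\ A = Diag4 a1 (- a1) a2 (- a2), B = Diag4 b1 b2 (- b1) (- b2)
       & C = Diag4 c1 c2 (- c2) (- c1)].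
Proof.
move=> dA dB dC H.
have [hA hB hC] := mxrep1 dA dB dC.
move: H; rewrite /psi /phi /e3.
lazymatch goal with |- ?l = 0 -> _ =>
  let pl := rf (envA A B C) hA hB hC (0 : R) (0 : R) (0 : R) (0 : R) (0 : R) (0 : R) l in
  move=> H; have H2 := etrans (esym pl) H
end.
getk H2 79%N; move=> e1; getk H2 115%N; move=> e2; getk H2 87%N; move=> e3.
getk H2 107%N; move=> e4; getk H2 103%N; move=> e5; getk H2 91%N; move=> e6.
exists (A 0 0), (A 2 2), (B 0 0), (B 1 1), (C 0 0), (C 1 1); split.
- rewrite {1}(diag_Diag4 dA); congr Diag4; lra.
- rewrite {1}(diag_Diag4 dB); congr Diag4; lra.
- rewrite {1}(diag_Diag4 dC); congr Diag4; lra.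
Qed.

Unset Implicit Arguments.
Set Strict Implicit.

Theorem proposition4p14 (R : realType) (A B C : 'M[R]_4) :
  is_diag_mx A -> is_diag_mx B -> is_diag_mx C ->
  \tr A = 0 -> \tr B = 0 -> \tr C = 0 ->
  (dd A B C (psi R) = 0 <->
   exists a1 a2 b1 b2 c1 c2 : R,
     [/\ A = Diag4 a1 (- a1) a2 (- a2), B = Diag4 b1 b2 (- b1) (- b2)
       & C = Diag4 c1 c2 (- c2) (- c1)]) /\
  (forall a1 a2 b1 b2 c1 c2 : R,
     A = Diag4 a1 (- a1) a2 (- a2) -> B = Diag4 b1 b2 (- b1) (- b2) ->
     C = Diag4 c1 c2 (- c2) (- c1) ->
     let t3 : lform R :=
       wedge (- (b1 + b2) *: om7b R + (a1 + a2) *: om1b R) (e2 R) +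
       wedge ((c1 + c2) *: om7b R - (a1 - a2) *: om2b R) (e1 R) +
       wedge ((b1 - b2) *: om2b R - (c1 - c2) *: om1b R) (e7 R) in
     is_tau3 A B C t3 /\
     [/\          lap A B C (phi R) = dstar A B C (dd A B C (phi R)),
         lap A B C (psi R) = dd A B C t3,
         lap A B C (psi R) = hodge (lap A B C (phi R)),
         lap A B C (phi R) =
           ((b1 + b2) ^+ 2 + (c1 + c2) ^+ 2) *: wedge (om7 R) (e7 R) +
           ((b1 - b2) ^+ 2 + (a1 - a2) ^+ 2) *: wedge (om2 R) (e2 R) +
           ((c1 - c2) ^+ 2 + (a1 + a2) ^+ 2) *: wedge (om1 R) (e1 R)
       & lap A B C (psi R) =
           ((b1 + b2) ^+ 2 + (c1 + c2) ^+ 2) *: wedge (om7 R) (e12 R) -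
           ((b1 - b2) ^+ 2 + (a1 - a2) ^+ 2) *: wedge (om2 R) (e17 R) +
           ((c1 - c2) ^+ 2 + (a1 + a2) ^+ 2) *: wedge (om1 R) (e27 R)]).
Proof.
move=> dA dB dC _ _ _; split.
  split; first exact: part1_fwd.
  by case=> a1 [a2 [b1 [b2 [c1 [c2 [-> -> ->]]]]]]; exact: part2_dpsi.
move=> a1 a2 b1 b2 c1 c2 -> -> -> t3.
split.
  split.
  - exact: p2_deg.
  - exact: p2_wphi.
  - exact: p2_wpsi.
  - exists 0, 0; split; first by move=> K _; rewrite ffunE.
    by rewrite scale0r add0r wedge0l scaler0 add0r p2_dphi.
split.
- exact: p2_L1.
- exact: p2_L2.
- exact: p2_L3.
- exact: p2_L4.
- exact: p2_L5.
Qed.
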